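(* For every fixed $t\in\mathcal{T}$, every fixed $y_0$, and with the remaining arguments held fixed, the state-of-charge functional $y(x^0,x^\uparrow,x^\downarrow,\xi,y_0,t)$ is concave and decreasing in $x^0\in\mathcal{F}(\mathcal{T},\mathbb{R})$, concave and nonincreasing in $x^\uparrow\in\mathcal{F}(\mathcal{T},\mathbb{R}_+)$, concave and nondecreasing in $x^\downarrow\in\mathcal{F}(\mathcal{T},\mathbb{R}_+)$, and nonincreasing in $\xi\in\mathcal{R}(\mathcal{T},[-1,1])$. Monotonicity is with respect to the pointwise order on functions, and concavity refers to the vector-space structure of the corresponding function spaces.
   Context: Fix a positive integer $K$, $\Delta t>0$, $T=K\Delta t$ and $\mathcal{T}=[0,T]$. Partition $\mathcal{T}$ into the intervals $\mathcal{T}_k=[(k-1)\Delta t,k\Delta t)$ for $k<K$ and $\mathcal{T}_K=[T-\Delta t,T]$. For $U\subseteq\mathbb{R}$, let $\mathcal{F}(\mathcal{T},U)$ be the set of functions $\mathcal{T}\to U$ that are constant on each $\mathcal{T}_k$, and let $\mathcal{R}(\mathcal{T},U)$ be the set of Riemann integrable functions $\mathcal{T}\to U$. Write $[z]^+=\max\{z,0\}$ and $[z]^-=\max\{-z,0\}$. Let $\eta^{c},\eta^{d}\in(0,1)$ be the charging and discharging efficiencies and let $y_0\ge 0$. The power output is $x(a,b,c,s)=a+[s]^+b-[s]^-c$ for $a\in\mathbb{R}$, $b,c\ge0$, $s\in\mathbb{R}$. For $x^0\in\mathcal{F}(\mathcal{T},\mathbb{R})$, $x^\uparrow,x^\downarrow\in\mathcal{F}(\mathcal{T},\mathbb{R}_+)$,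 $\xi\in\mathcal{R}(\mathcal{T},[-1,1])$ and $t\in\mathcal{T}$, the state of charge is $$y(x^0,x^\uparrow,x^\downarrow,\xi,y_0,t)=y_0+\int_0^t \eta^{c}\big[x(x^0(\tau),x^\uparrow(\tau),x^\downarrow(\tau),\xi(\tau))\big]^- -\frac{1}{\eta^{d}}\big[x(x^0(\tau),x^\uparrow(\tau),x^\downarrow(\tau),\xi(\tau))\big]^+\,d\tau .$$ *)

(* Defs.v *)
From Stdlib Require Import Reals Lra.
From Coquelicot Require Import Coquelicot.
Open Scope R_scope.

Definition posp (z : R) : R := Rmax z 0.
Definition negp (z : R) : R := Rmax (- z) 0.

Definition xout (a b c s : R) : R := a + posp s * b - negp s * c.

(* T_k = [(k-1)dt, k dt) for k < K, T_K = [T - dt, T]  (k = 1..K) *)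
Definition in_Tk (K : nat) (dt : R) (k : nat) (s : R) : Prop :=
  (INR k - 1) * dt <= s /\ (s < INR k * dt \/ (k = K /\ s <= INR k * dt)).

Definition in_horizon (K : nat) (dt : R) (s : R) : Prop := 0 <= s <= INR K * dt.

(* f in F(T, U): constant on each T_k and valued in U on [0,T]
   (functions are represented as R -> R; only values on [0,T] matter) *)
Definition in_F (K : nat) (dt : R) (U : R -> Prop) (f : R -> R) : Prop :=
  (forall s, in_horizon K dt s -> U (f s)) /\
  (forall k, (1 <= k <= K)%nat -> forall s u,
      in_Tk K dt k s -> in_Tk K dt k u -> f s = f u).

Definition in_Riem (K : nat) (dt : R) (U : R -> Prop) (f : R -> R) : Prop :=
  ex_RInt f 0 (INR K * dt) /\ (forall s, in_horizon K dt s -> U (f s)).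

Definition allR (z : R) : Prop := True.
Definition nonnegR (z : R) : Prop := 0 <= z.
Definition unit_box (z : R) : Prop := -1 <= z <= 1.

Definition soc (etac etad : R) (x0 xu xd xi : R -> R) (y0 t : R) : R :=
  y0 + RInt (fun tau =>
        etac * negp (xout (x0 tau) (xu tau) (xd tau) (xi tau))
        - / etad * posp (xout (x0 tau) (xu tau) (xd tau) (xi tau))) 0 t.

Definition le_on (K : nat) (dt : R) (f g : R -> R) : Prop :=
  forall s, in_horizon K dt s -> f s <= g s.

Definition concave_on (S : (R -> R) -> Prop) (Phi : (R -> R) -> R) : Prop :=
  forall f g (l : R), S f -> S g -> 0 <= l <= 1 ->
    l * Phi f + (1 - l) * Phi g <= Phi (fun s => l * f s + (1 - l) * g s).

Definition nonincreasing_on (K : nat) (dt : R) (S : (R -> R) -> Prop)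
    (Phi : (R -> R) -> R) : Prop :=
  forall f g, S f -> S g -> le_on K dt f g -> Phi g <= Phi f.

Definition nondecreasing_on (K : nat) (dt : R) (S : (R -> R) -> Prop)
    (Phi : (R -> R) -> R) : Prop :=
  forall f g, S f -> S g -> le_on K dt f g -> Phi f <= Phi g.

(* Main.v *)
Require Import Defs.
From Stdlib Require Import Reals Lra Lia.
From Coquelicot Require Import Coquelicot.
Open Scope R_scope.

Definition psi (etac etad z : R) : R := etac * negp z - / etad * posp z.

Lemma ex_abs (f : R -> R) a b : ex_RInt f a b -> ex_RInt (fun x => Rabs (f x)) a b.
Proof. intro H. apply ex_RInt_Reals_1. apply RiemannInt_P16. now apply ex_RInt_Reals_0. Qed.

Lemma ex_lin (f g : R -> R) a b p q r : ex_RInt f a b -> ex_RInt g a b ->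
  ex_RInt (fun x => p * f x + q * g x + r) a b.
Proof.
  intros Hf Hg.
  apply (ex_RInt_plus (fun x => p * f x + q * g x) (fun _ => r)); [|apply ex_RInt_const].
  apply (ex_RInt_plus (fun x => p * f x) (fun x => q * g x)).
  - apply (ex_RInt_scal f a b p Hf).
  - apply (ex_RInt_scal g a b q Hg).
Qed.

Lemma posp_abs z : posp z = (z + Rabs z) / 2.
Proof. unfold posp, Rmax, Rabs; destruct Rle_dec; destruct Rcase_abs; lra. Qed.
Lemma negp_abs z : negp z = (Rabs z - z) / 2.
Proof. unfold negp, Rmax, Rabs; destruct Rle_dec; destruct Rcase_abs; lra. Qed.

Lemma ex_piece etac etad (xi : R -> R) a b c l r : etad <> 0 -> ex_RInt xi l r ->
  ex_RInt (fun s => psi etac etad (xout a b c (xi s))) l r.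
Proof.
  intros Hd H.
  assert (H1 := ex_abs _ _ _ H).
  assert (H2 : ex_RInt (fun s => xout a b c (xi s)) l r).
  { eapply ex_RInt_ext; [|apply (ex_lin xi (fun s => Rabs (xi s)) l r
         ((b + c) / 2) ((b - c)/2) a H H1)].
    intros x _. change ((b + c) / 2 * xi x + (b - c) / 2 * Rabs (xi x) + a = a + posp (xi x) * b - negp (xi x) * c). unfold xout. rewrite posp_abs, negp_abs. field. }
  assert (H3 := ex_abs _ _ _ H2).
  eapply ex_RInt_ext; [|apply (ex_lin _ _ l r (- etac / 2 - / etad / 2)
      (etac / 2 - / etad / 2) 0 H2 H3)].
  intros x _. unfold psi. set (z := xout a b c (xi x)).
  change ((- etac / 2 - / etad / 2) * z + (etac / 2 - / etad / 2) * Rabs z + 0 = etac * negp z - / etad * posp z).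
  rewrite posp_abs, negp_abs. field. exact Hd.
Qed.

Definition Cst (K : nat) (dt : R) (f : R -> R) : Prop :=
  forall k, (1 <= k <= K)%nat -> forall s u,
      in_Tk K dt k s -> in_Tk K dt k u -> f s = f u.

Lemma glue (K : nat) (dt : R) (F : R -> R) :
  (forall k, (1 <= k <= K)%nat -> ex_RInt F ((INR k - 1) * dt) (INR k * dt)) ->
  forall n, (n <= K)%nat -> ex_RInt F 0 (INR n * dt).
Proof.
  intros H n. induction n as [|n IH]; intros Hn.
  - simpl. rewrite Rmult_0_l. apply ex_RInt_point.
  - apply (ex_RInt_Chasles F 0 (INR n * dt)).
    + apply IH. lia.
    + assert (E : INR n = INR (S n) - 1) by (rewrite S_INR; ring).
      rewrite E. apply H. lia.
Qed.

Lemma ex_integrand K dt etac etad x0 xu xd (xi : R -> R) t :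
  0 < dt -> etad <> 0 -> Cst K dt x0 -> Cst K dt xu -> Cst K dt xd ->
  ex_RInt xi 0 (INR K * dt) -> 0 <= t <= INR K * dt ->
  ex_RInt (fun tau => psi etac etad (xout (x0 tau) (xu tau) (xd tau) (xi tau))) 0 t.
Proof.
  intros Hdt Hd C0 Cu Cd Hxi Ht.
  apply (@ex_RInt_Chasles_1 R_CompleteNormedModule _ 0 t (INR K * dt)); [lra|].
  apply (glue K dt); [|lia].
  intros k Hk.
  assert (Hk1 : 1 <= INR k) by (change 1 with (INR 1); apply le_INR; lia).
  assert (HkK : INR k <= INR K) by (apply le_INR; lia).
  set (u := (INR k - 1) * dt).
  assert (Hu : in_Tk K dt k u) by (unfold in_Tk, u; split; [lra| left; nra]).
  apply (ex_RInt_ext (fun s => psi etac etad (xout (x0 u) (xu u) (xd u) (xi s)))).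
  - intros s Hs.
    rewrite Rmin_left in Hs by (unfold u; nra).
    rewrite Rmax_right in Hs by (unfold u; nra).
    assert (Hs' : in_Tk K dt k s) by (unfold in_Tk; split; [unfold u in Hs; lra | left; lra]).
    rewrite (C0 k Hk s u Hs' Hu), (Cu k Hk s u Hs' Hu), (Cd k Hk s u Hs' Hu).
    reflexivity.
  - apply ex_piece; [exact Hd|].
    apply (@ex_RInt_Chasles_2 R_CompleteNormedModule _ 0); [unfold u; split; nra|].
    apply (@ex_RInt_Chasles_1 R_CompleteNormedModule _ _ _ (INR K * dt)); [split; nra|].
    exact Hxi.
Qed.

Lemma psi_min etac etad z : 0 < etac < 1 -> 0 < etad < 1 ->
  psi etac etad z = Rmin (- etac * z) (- / etad * z).
Proof.
  intros Hc Hd. assert (Hi : 1 < / etad).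
  { rewrite <- Rinv_1. apply Rinv_lt_contravar; lra. }
  unfold psi, negp, posp, Rmin, Rmax.
  repeat destruct Rle_dec; nra.
Qed.

Lemma psi_mono etac etad x y : 0 < etac < 1 -> 0 < etad < 1 -> x <= y ->
  psi etac etad y <= psi etac etad x.
Proof.
  intros Hc Hd Hxy. assert (Hi : 1 < / etad).
  { rewrite <- Rinv_1. apply Rinv_lt_contravar; lra. }
  rewrite !psi_min by assumption. unfold Rmin.
  repeat destruct Rle_dec; nra.
Qed.

Lemma psi_conc etac etad x y l : 0 < etac < 1 -> 0 < etad < 1 -> 0 <= l <= 1 ->
  l * psi etac etad x + (1 - l) * psi etac etad y <= psi etac etad (l * x + (1 - l) * y).
Proof.
  intros Hc Hd Hl.
  rewrite !psi_min by assumption.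
  apply Rmin_glb.
  - apply Rle_trans with (l * (- etac * x) + (1 - l) * (- etac * y)); [|lra].
    apply Rplus_le_compat; apply Rmult_le_compat_l; try lra; apply Rmin_l.
  - apply Rle_trans with (l * (- / etad * x) + (1 - l) * (- / etad * y)); [|lra].
    apply Rplus_le_compat; apply Rmult_le_compat_l; try lra; apply Rmin_r.
Qed.

Lemma xout_mono a b c s1 s2 : 0 <= b -> 0 <= c -> s1 <= s2 ->
  xout a b c s1 <= xout a b c s2.
Proof.
  intros Hb Hc Hs. unfold xout, posp, negp, Rmax.
  repeat destruct Rle_dec; nra.
Qed.

Lemma soc_eq etac etad x0 xu xd xi y0 t :
  soc etac etad x0 xu xd xi y0 t =
  y0 + RInt (fun tau => psi etac etad (xout (x0 tau) (xu tau) (xd tau) (xi tau))) 0 t.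
Proof. reflexivity. Qed.

Lemma le_gen (F G : R -> R) y0 t : 0 <= t -> ex_RInt F 0 t -> ex_RInt G 0 t ->
  (forall x, 0 < x < t -> F x <= G x) -> y0 + RInt F 0 t <= y0 + RInt G 0 t.
Proof.
  intros Ht HF HG H. apply Rplus_le_compat_l. apply RInt_le; auto.
Qed.

Lemma conc_gen (F1 F2 G : R -> R) y0 t l : 0 <= t -> ex_RInt F1 0 t -> ex_RInt F2 0 t ->
  ex_RInt G 0 t ->
  (forall x, 0 < x < t -> l * F1 x + (1 - l) * F2 x <= G x) ->
  l * (y0 + RInt F1 0 t) + (1 - l) * (y0 + RInt F2 0 t) <= y0 + RInt G 0 t.
Proof.
  intros Ht H1 H2 HG H.
  assert (E : RInt (fun x => l * F1 x + (1 - l) * F2 x) 0 t = l * RInt F1 0 t + (1 - l) * RInt F2 0 t).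
  { rewrite (RInt_plus (V := R_CompleteNormedModule) (fun x => l * F1 x) (fun x => (1 - l) * F2 x)).
    - assert (A1 : RInt (fun x => l * F1 x) 0 t = l * RInt F1 0 t)
        by exact (RInt_scal (V := R_CompleteNormedModule) F1 0 t l H1).
      assert (A2 : RInt (fun x => (1 - l) * F2 x) 0 t = (1 - l) * RInt F2 0 t)
        by exact (RInt_scal (V := R_CompleteNormedModule) F2 0 t (1 - l) H2).
      change (RInt (fun x => l * F1 x) 0 t + RInt (fun x => (1 - l) * F2 x) 0 t = l * RInt F1 0 t + (1 - l) * RInt F2 0 t).
      rewrite A1, A2. reflexivity.
    - apply (ex_RInt_scal F1 0 t l H1).
    - apply (ex_RInt_scal F2 0 t (1 - l) H2). }
  assert (Hc : ex_RInt (fun x => l * F1 x + (1 - l) * F2 x) 0 t).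
  { apply (ex_RInt_plus (fun x => l * F1 x) (fun x => (1 - l) * F2 x)).
    - apply (ex_RInt_scal F1 0 t l H1).
    - apply (ex_RInt_scal F2 0 t (1 - l) H2). }
  assert (Hle := RInt_le _ _ 0 t Ht Hc HG H).
  rewrite E in Hle. nra.
Qed.

Lemma comb_allR K dt f g l : in_F K dt allR f -> in_F K dt allR g ->
  in_F K dt allR (fun s => l * f s + (1 - l) * g s).
Proof.
  intros [_ Hf] [_ Hg]. split; [intros; exact I|].
  intros k Hk s u Hs Hu. rewrite (Hf k Hk s u Hs Hu), (Hg k Hk s u Hs Hu). reflexivity.
Qed.

Lemma comb_nonneg K dt f g l : 0 <= l <= 1 -> in_F K dt nonnegR f -> in_F K dt nonnegR g ->
  in_F K dt nonnegR (fun s => l * f s + (1 - l) * g s).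
Proof.
  intros Hl [Pf Hf] [Pg Hg]. split.
  - intros s Hs. specialize (Pf s Hs). specialize (Pg s Hs). unfold nonnegR in *. nra.
  - intros k Hk s u Hs Hu. rewrite (Hf k Hk s u Hs Hu), (Hg k Hk s u Hs Hu). reflexivity.
Qed.

Lemma xout_la l a1 a2 b c s : xout (l * a1 + (1 - l) * a2) b c s = l * xout a1 b c s + (1 - l) * xout a2 b c s.
Proof. unfold xout; ring. Qed.
Lemma xout_lb l a b1 b2 c s : xout a (l * b1 + (1 - l) * b2) c s = l * xout a b1 c s + (1 - l) * xout a b2 c s.
Proof. unfold xout; ring. Qed.
Lemma xout_lc l a b c1 c2 s : xout a b (l * c1 + (1 - l) * c2) s = l * xout a b c1 s + (1 - l) * xout a b c2 s.
Proof. unfold xout; ring. Qed.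
Lemma posp_ge0 z : 0 <= posp z. Proof. unfold posp; apply Rmax_r. Qed.
Lemma negp_ge0 z : 0 <= negp z. Proof. unfold negp; apply Rmax_r. Qed.

Theorem proposition2 (K : nat) (dt etac etad : R) :
  (0 < K)%nat -> 0 < dt -> 0 < etac < 1 -> 0 < etad < 1 ->
  forall (y0 t : R), 0 <= y0 -> in_horizon K dt t ->
  (* in x0, for fixed xu, xd, xi *)
  (forall xu xd xi, in_F K dt nonnegR xu -> in_F K dt nonnegR xd ->
     in_Riem K dt unit_box xi ->
     concave_on (in_F K dt allR) (fun x0 => soc etac etad x0 xu xd xi y0 t) /\
     nonincreasing_on K dt (in_F K dt allR)
       (fun x0 => soc etac etad x0 xu xd xi y0 t)) /\
  (* in xu *)
  (forall x0 xd xi, in_F K dt allR x0 -> in_F K dt nonnegR xd ->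
     in_Riem K dt unit_box xi ->
     concave_on (in_F K dt nonnegR) (fun xu => soc etac etad x0 xu xd xi y0 t) /\
     nonincreasing_on K dt (in_F K dt nonnegR)
       (fun xu => soc etac etad x0 xu xd xi y0 t)) /\
  (* in xd *)
  (forall x0 xu xi, in_F K dt allR x0 -> in_F K dt nonnegR xu ->
     in_Riem K dt unit_box xi ->
     concave_on (in_F K dt nonnegR) (fun xd => soc etac etad x0 xu xd xi y0 t) /\
     nondecreasing_on K dt (in_F K dt nonnegR)
       (fun xd => soc etac etad x0 xu xd xi y0 t)) /\
  (* in xi *)
  (forall x0 xu xd, in_F K dt allR x0 -> in_F K dt nonnegR xu ->
     in_F K dt nonnegR xd ->
     nonincreasing_on K dt (in_Riem K dt unit_box)
       (fun xi => soc etac etad x0 xu xd xi y0 t)).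
Proof.
  intros HK Hdt Hc Hd y0 t Hy0 Ht.
  assert (Hd0 : etad <> 0) by lra.
  unfold in_horizon in Ht.
  assert (Hhor : forall x, 0 < x < t -> in_horizon K dt x) by (intros; unfold in_horizon; lra).
  Ltac exi K dt := apply (ex_integrand K dt); auto;
    match goal with
    | H : in_F _ _ _ ?f |- Cst _ _ ?f => exact (proj2 H)
    | H : in_Riem _ _ _ ?f |- ex_RInt ?f _ _ => exact (proj1 H)
    | |- Cst _ _ _ => apply comb_allR || (apply comb_nonneg; assumption); assumption
    | _ => idtac
    end.
  split; [|split; [|split]].
  - intros xu xd xi Hu Hdd Hxi. split.
    + intros f g l Hf Hg Hl. rewrite !soc_eq.
      apply conc_gen; try lra.
      * exi K dt.
      * exi K dt.
      * apply (ex_integrand K dt); auto; [exact (proj2 (comb_allR K dt f g l Hf Hg))|exact (proj2 Hu)|exact (proj2 Hdd)|exact (proj1 Hxi)].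
      * intros x Hx. rewrite xout_la. apply psi_conc; auto.
    + intros f g Hf Hg Hle. rewrite !soc_eq. apply le_gen; try lra.
      * exi K dt.
      * exi K dt.
      * intros x Hx. apply psi_mono; auto. specialize (Hle x (Hhor x Hx)). unfold xout; lra.
  - intros x0 xd xi H0 Hdd Hxi. split.
    + intros f g l Hf Hg Hl. rewrite !soc_eq.
      apply conc_gen; try lra.
      * exi K dt.
      * exi K dt.
      * apply (ex_integrand K dt); auto; [exact (proj2 H0)|exact (proj2 (comb_nonneg K dt f g l Hl Hf Hg))|exact (proj2 Hdd)|exact (proj1 Hxi)].
      * intros x Hx. rewrite xout_lb. apply psi_conc; auto.
    + intros f g Hf Hg Hle. rewrite !soc_eq. apply le_gen; try lra.
      * exi K dt.
      * exi K dt.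
      * intros x Hx. apply psi_mono; auto. specialize (Hle x (Hhor x Hx)).
        pose proof (posp_ge0 (xi x)). unfold xout; nra.
  - intros x0 xu xi H0 Hu Hxi. split.
    + intros f g l Hf Hg Hl. rewrite !soc_eq.
      apply conc_gen; try lra.
      * exi K dt.
      * exi K dt.
      * apply (ex_integrand K dt); auto; [exact (proj2 H0)|exact (proj2 Hu)|exact (proj2 (comb_nonneg K dt f g l Hl Hf Hg))|exact (proj1 Hxi)].
      * intros x Hx. rewrite xout_lc. apply psi_conc; auto.
    + intros f g Hf Hg Hle. rewrite !soc_eq. apply le_gen; try lra.
      * exi K dt.
      * exi K dt.
      * intros x Hx. apply psi_mono; auto. specialize (Hle x (Hhor x Hx)).
        pose proof (negp_ge0 (xi x)). unfold xout; nra.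
  - intros x0 xu xd H0 Hu Hdd f g Hf Hg Hle. rewrite !soc_eq. apply le_gen; try lra.
    + exi K dt.
    + exi K dt.
    + intros x Hx. apply psi_mono; auto. apply xout_mono.
      * exact (proj1 Hu x (Hhor x Hx)).
      * exact (proj1 Hdd x (Hhor x Hx)).
      * exact (Hle x (Hhor x Hx)).
Qed.
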